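(* Let $G=(V,E)$ be an undirected graph (possibly with non-negative edge weights) such that the set $\mathcal{D}=\{(u,v)\in V\times V: u\ne v\}$ can be partitioned into a class $A=\{(u^*,v^* )\}$ consisting of a single pair of distinct nodes with $\sigma_{u^*v^*}\le 2$, and a class $B=\mathcal{D}\setminus A$ of pairs $(u,v)$ with $\sigma_{uv}\le1$. Then the pseudodimension of the family $\{f_w:\mathcal{D}\to[0,1],\ w\in V\}$ is at most $3$.
   Context: $\sigma_{uv}$ is the number of shortest paths from $u$ to $v$; $\sigma_{uv}(w)$ is the number of those to which $w$ is internal ($w\ne u$, $w\ne v$, and the path goes through $w$). $f_w(u,v)=\sigma_{uv}(w)/\sigma_{uv}$, taken to be $0$ if $\sigma_{uv}=0$. Pseudodimension: for a family $\mathcal{F}$ of functions from a domain $D$ to $[0,1]$, let $R_f=\{(x,t)\in D\times[0,1]: t\le f(x)\}$ and $\mathcal{F}^+=\{R_f: f\in\mathcal{F}\}$. A set $A\subseteq D\times[0,1]$ is shattered by $\mathcal{F}^+$ if $\{R\cap A: R\in\mathcal{F}^+\}=2^A$. The pseudodimension of $\mathcal{F}$ is the largest size of a subset of $D\times[0,1]$ shattered by $\mathcal{F}^+$ (the VC-dimension of $\mathcal{F}^+$). *)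

(* Defs.v *)
From mathcomp Require Import all_boot all_order all_algebra.
Set Implicit Arguments. Unset Strict Implicit. Unset Printing Implicit Defensive.
Import Order.TTheory GRing.Theory Num.Theory.
Local Open Scope ring_scope.

Section Paths.
Variables (R : realFieldType) (V : finType) (e : rel V) (wt : V -> V -> R).

Definition is_upath (u v : V) (s : seq V) : bool :=
  match s with
  | [::] => false
  | x :: p => [&& x == u, last x p == v, path e x p & uniq s]
  end.

Definition pweight (s : seq V) : R :=
  match s with
  | [::] => 0
  | x :: p => \sum_(ab <- zip (x :: p) p) wt ab.1 ab.2
  end.

(* s is a shortest u-v path: a simple u-v path of weight <= every simple
   u-v path (simple paths have at most #|V| vertices) *)
Definition is_shortest (u v : V) (s : seq V) : bool :=
  is_upath u v s &&
  [forall n : 'I_#|V|.+1, forall t : n.-tuple V,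
     is_upath u v t ==> (pweight s <= pweight t)].

Definition sigma (u v : V) : nat :=
  \sum_(n < #|V|.+1) #|[pred t : n.-tuple V | is_shortest u v t]|.

Definition sigma_via (u v w : V) : nat :=
  \sum_(n < #|V|.+1)
    #|[pred t : n.-tuple V | [&& is_shortest u v t, w \in (t : seq V),
                                 w != u & w != v]]|.

Definition fbc (w : V) (uv : V * V) : R :=
  if sigma uv.1 uv.2 == 0%N then 0
  else (sigma_via uv.1 uv.2 w)%:R / (sigma uv.1 uv.2)%:R.

Definition shattered (A : seq ((V * V) * R)) : Prop :=
  uniq A /\
  (forall a, a \in A -> a.1.1 != a.1.2 /\ 0 <= a.2 <= 1) /\
  (forall S : seq ((V * V) * R), {subset S <= A} ->
     exists w : V, forall a, a \in A -> (a \in S) = (a.2 <= fbc w a.1)).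

Definition pdim_le (d : nat) : Prop :=
  forall A, shattered A -> (size A <= d)%N.

End Paths.

(* Main.v *)
Require Import Defs.
From mathcomp Require Import all_boot all_order all_algebra zify.
Set Implicit Arguments. Unset Strict Implicit. Unset Printing Implicit Defensive.
Import Order.TTheory GRing.Theory Num.Theory.
Local Open Scope ring_scope.

Section S.
Variables (R : realFieldType) (V : finType) (e : rel V) (wt : V -> V -> R).
Hypotheses (e_sym : symmetric e) (wt_sym : forall x y, wt x y = wt y x)
  (wt_ge0 : forall x y, 0 <= wt x y).

Fixpoint wseq (s : seq V) : R :=
  match s with x :: ((y :: _) as t) => wt x y + wseq t | _ => 0 end.

Lemma wseq_consC x w : wseq (x :: w) = (if w is y :: _ then wt x y else 0) + wseq w.
Proof. by case: w => [|y w] //=; rewrite addr0. Qed.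

Lemma pweightE s : pweight wt s = wseq s.
Proof.
case: s => // x p; rewrite /pweight.
elim: p x => [|y p IH] x /=; first by rewrite big_nil.
by rewrite big_cons /= IH.
Qed.

Lemma wseq_ge0 s : 0 <= wseq s.
Proof.
elim: s => //= x [|y s] IH //; exact: addr_ge0.
Qed.

Lemma wseq_cat s y t : wseq (s ++ y :: t) = wseq (rcons s y) + wseq (y :: t).
Proof.
elim: s => [|x [|z s] IH]; first by rewrite /= add0r.
  by rewrite /= addr0.
rewrite cat_cons rcons_cons wseq_consC IH wseq_consC /= addrA.
by [].
Qed.

Lemma wseq_rev s : wseq (rev s) = wseq s.
Proof.
case: s => // x s; elim: s x => [|y s IH] x //.
have -> : rev [:: x, y & s] = rev s ++ [:: y; x].
  by rewrite rev_cons rev_cons -!cats1 -catA.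
rewrite wseq_cat -rev_cons IH /= addr0 wt_sym addrC.
by [].
Qed.

Lemma last_rev (x : V) s : last x (rev s) = head x s.
Proof. by case: s => // y s; rewrite rev_cons last_rcons. Qed.

Lemma upath_rev u v s : is_upath e u v s -> is_upath e v u (rev s).
Proof.
case: s => // x p /and4P [/eqP -> /eqP lv pth un].
have H : rev (u :: p) = v :: rev (belast u p) by rewrite lastI rev_rcons lv.
rewrite H /=; apply/and4P; split => //.
- by have := last_rev v (u :: p); rewrite H /= => ->.
- rewrite -lv rev_path; rewrite (@eq_path _ _ e) //; move=> a b; exact: e_sym.
- by move: un; rewrite -rev_uniq H.
Qed.

Lemma upath_size u v s : is_upath e u v s -> (size s < #|V|.+1)%N.
Proof.
case: s => // x p /and4P [_ _ _ un].
by rewrite ltnS -(card_uniqP un) max_card.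
Qed.

Lemma shortest_le u v s t : is_shortest e wt u v s -> is_upath e u v t ->
  pweight wt s <= pweight wt t.
Proof.
move=> /andP [_ /forallP H] ht.
have := H (Ordinal (upath_size ht)) => /forallP /(_ (in_tuple t)) /implyP.
by apply.
Qed.

Lemma shortest_intro u v s : is_upath e u v s ->
  (forall t, is_upath e u v t -> pweight wt s <= pweight wt t) ->
  is_shortest e wt u v s.
Proof.
move=> hs H; rewrite /is_shortest hs /=.
apply/forallP => n; apply/forallP => t; apply/implyP => ht; exact: H.
Qed.

Lemma shortest_upath u v s : is_shortest e wt u v s -> is_upath e u v s.
Proof. by case/andP. Qed.

Lemma shortest_rev u v s : is_shortest e wt u v s -> is_shortest e wt v u (rev s).
Proof.
move=> hs; apply: shortest_intro; first exact/upath_rev/shortest_upath.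
move=> t ht; rewrite !pweightE wseq_rev -(wseq_rev t) -!pweightE.
apply: shortest_le hs _; exact: upath_rev ht.
Qed.


Definition wk (s : seq V) := if s is x :: p then path e x p else true.

Lemma upathE u v s : is_upath e u v s =
  [&& s != [::], head u s == u, last u s == v, wk s & uniq s].
Proof. by case: s. Qed.

Lemma wseq_catl x c d : wseq ((x :: c) ++ d) = wseq (x :: c) + wseq (last x c :: d).
Proof.
elim: c x => [|y c IH] x; first by rewrite /= add0r.
rewrite cat_cons wseq_consC IH [wseq (x :: y :: c)]wseq_consC /=.
by rewrite addrA.
Qed.

Lemma wseq_split a x c b :
  wseq (a ++ (x :: c) ++ b) = wseq (rcons a x) + wseq (x :: c) + wseq (last x c :: b).
Proof. by rewrite cat_cons wseq_cat -cat_cons wseq_catl addrA. Qed.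

Lemma wk_split a x c b :
  wk (a ++ (x :: c) ++ b) = [&& wk (rcons a x), path e x c & wk (last x c :: b)].
Proof.
case: a => [|a0 a] /=; first by rewrite cat_path.
by rewrite cat_path /= cat_path rcons_path !andbA.
Qed.

Lemma head_split (y : V) a x r : head y (a ++ x :: r) = head x a.
Proof. by case: a. Qed.

Lemma shortcut p x : path e x p -> exists p', [/\ path e x p', uniq (x :: p'),
  last x p' = last x p, {subset p' <= p} & wseq (x :: p') <= wseq (x :: p)].
Proof.
elim: (size p).+1 {-2}p (ltnSn (size p)) x => // n IH {}p lt x pth.
have E : forall a b s, wseq [:: a, b & s] = wt a b + wseq (b :: s) by [].
case xp: (x \in p).
  case/splitPr: xp pth lt => p1 p2; rewrite cat_path => /andP [_ /andP [_ pth2]] lt.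
  have lt2 : (size p2 < n)%N.
    rewrite size_cat /= in lt.
    apply: leq_ltn_trans (leq_addl (size p1) (size p2)) _; by rewrite -ltnS -addnS.
  have [p' [h1 h2 h3 h4 h5]] := IH p2 lt2 x pth2.
  exists p'; split => //.
  - by rewrite last_cat h3.
  - by move=> z /h4 zp; rewrite mem_cat inE zp !orbT.
  - apply: le_trans h5 _; rewrite -cat_cons wseq_cat lerDr; exact: wseq_ge0.
case: p lt pth xp => [|y q] lt pth xp.
  by exists [::]; split.
move: pth => /andP [exy pthq].
have [q' [h1 h2 h3 h4 h5]] := IH q lt y pthq.
have sub : {subset y :: q' <= y :: q}.
  by move=> z; rewrite !inE => /orP [->|/h4 ->]; rewrite ?orbT.
exists (y :: q'); split => //.
- by rewrite /= exy.
- rewrite cons_uniq h2 andbT; apply/negP => /sub; by rewrite xp.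
- by rewrite !E lerD2l.
Qed.

Lemma shortcut' s : wk s -> s != [::] -> exists s', [/\ wk s', uniq s', s' != [::],
  (forall y, head y s' = head y s /\ last y s' = last y s) &
  wseq s' <= wseq s].
Proof.
case: s => // x p /= pth _.
have [p' [h1 h2 h3 h4 h5]] := shortcut pth.
by exists (x :: p'); split => // y; split => //; rewrite /= h3.
Qed.

Lemma seg u v a x m b : is_shortest e wt u v (a ++ (x :: m) ++ b) ->
  is_shortest e wt x (last x m) (x :: m).
Proof.
move=> hs; have hu := shortest_upath hs.
move: (hu); rewrite upathE => /and5P [_ /eqP hh /eqP hl hw hun].
rewrite wk_split in hw; case/and3P: hw => hw1 hpm hw3.
apply: shortest_intro.
  rewrite /= eqxx eqxx hpm /=.
  by move: hun; rewrite !cat_uniq => /and3P [_ _ /and3P []].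
move=> t ht; rewrite leNgt; apply/negP => lt.
case: t ht lt => // x' t' /and4P [/eqP ex' /eqP lt' pt' ut'] lt; subst x'.
set W := a ++ (x :: t') ++ b.
have wW : wk W by rewrite /W wk_split hw1 pt' lt' hw3.
have nW : W != [::] by rewrite /W -size_eq0 !size_cat /= addnS.
have [W' [w1 w2 w3 w45 w6]] := shortcut' wW nW.
have [w4 w5] := w45 u.
have uW' : is_upath e u v W'.
  rewrite upathE w1 w2 w3 w4 w5 /W head_split last_cat /= last_cat lt'.
  rewrite head_split in hh; rewrite hh eqxx /=.
  by rewrite -hl last_cat /= last_cat eqxx.
have := shortest_le hs uW'; rewrite leNgt => /negP; apply.
rewrite !pweightE; apply: le_lt_trans w6 _.
rewrite /W !wseq_split lt'; rewrite ltrD2r ltrD2l.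
by move: lt; rewrite !pweightE.
Qed.


Lemma card_sh_pos u v s (n : 'I_#|V|.+1) : val n = size s -> is_shortest e wt u v s ->
  (0 < #|[pred t : n.-tuple V | is_shortest e wt u v t]|)%N.
Proof.
case: n => n /= ltn En hs; subst n.
by apply/card_gt0P; exists (in_tuple s); rewrite inE.
Qed.

Lemma sigma_ge u v (n : 'I_#|V|.+1) :
  (#|[pred t : n.-tuple V | is_shortest e wt u v t]| <= sigma e wt u v)%N.
Proof. by rewrite /sigma (bigD1 n) //= leq_addr. Qed.

Lemma sigma_pos u v s : is_shortest e wt u v s -> (0 < sigma e wt u v)%N.
Proof.
move=> hs; have sz := upath_size (shortest_upath hs).
exact: leq_trans (card_sh_pos (n := Ordinal sz) erefl hs) (sigma_ge _ _ _).
Qed.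

Lemma sigma_uniq u v s1 s2 : (sigma e wt u v <= 1)%N ->
  is_shortest e wt u v s1 -> is_shortest e wt u v s2 -> s1 = s2.
Proof.
move=> hsig h1 h2; apply/eqP; rewrite -[s1 == s2]negbK; apply/negP => ne.
have sz1 := upath_size (shortest_upath h1).
have sz2 := upath_size (shortest_upath h2).
set n1 := Ordinal sz1; set n2 := Ordinal sz2.
case: (eqVneq n1 n2) => [E|N].
  have esz : size s2 == size s1 by move: E => /(congr1 val) /= ->.
  have : (1 < #|[pred t : n1.-tuple V | is_shortest e wt u v t]|)%N.
    apply/card_gt1P; exists (in_tuple s1), (@Tuple (size s1) V s2 esz).
    split; rewrite ?inE //=.
  move=> H; have := leq_trans H (sigma_ge u v n1); by rewrite ltnNge hsig.
have c1 := card_sh_pos (n := n1) erefl h1.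
have c2 := card_sh_pos (n := n2) erefl h2.
have : (2 <= sigma e wt u v)%N.
  rewrite /sigma (bigD1 n1) //= (bigD1 n2) /=; last by rewrite eq_sym.
  rewrite addnA; apply: leq_trans (leq_addr _ _); exact: (leq_add c1 c2).
by rewrite leqNgt ltnS hsig.
Qed.


Definition Uq := forall u v s1 s2, u != v -> is_shortest e wt u v s1 ->
  is_shortest e wt u v s2 -> s1 = s2.

Lemma Uq_of us vs : us != vs ->
  (forall u v : V, u != v -> (u, v) != (us, vs) -> (sigma e wt u v <= 1)%N) -> Uq.
Proof.
move=> huv hB u v s1 s2 nuv h1 h2.
case: (eqVneq (u, v) (us, vs)) => [[eu ev]|ne]; last exact: sigma_uniq (hB _ _ nuv ne) h1 h2.
subst u v; apply: (can_inj (@revK V)).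
apply: sigma_uniq (hB _ _ _ _) (shortest_rev h1) (shortest_rev h2).
  by rewrite eq_sym.
by apply/negP => /eqP [E _]; move: huv; rewrite E eqxx.
Qed.

Definition Int (p : V * V) w := exists s, [/\ is_shortest e wt p.1 p.2 s, w \in s,
  w != p.1 & w != p.2].

Lemma endpoints u v a x c' b y : is_upath e u v (a ++ (x :: c') ++ b) ->
  x != u -> last x c' != v -> y \in x :: c' -> y != u /\ y != v.
Proof.
rewrite upathE => /and5P [_ /eqP hh /eqP hl _ un] xu zv yc.
rewrite head_split in hh; rewrite last_cat /= last_cat in hl.
split.
  case: a hh un => [/= E|a0 a <-]; first by move: xu; rewrite E eqxx.
  rewrite cat_uniq => /and3P [_ /hasPn H _].
  apply/eqP => E.
  have yin : y \in (x :: c') ++ b by rewrite mem_cat yc.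
  by have := H y yin; rewrite E /= inE eqxx.
case: b hl un => [/= E|b0 b] ; first by move: zv; rewrite E eqxx.
move=> hl; rewrite catA cat_uniq => /and3P [_ /hasPn H _].
apply/eqP => E.
have : v \in b0 :: b by rewrite -hl /=; exact: mem_last.
move/H; by rewrite -E mem_cat yc orbT.
Qed.

Lemma sub_int (U : Uq) p x z q y : p.1 != p.2 -> Int p x -> Int p z -> x != z ->
  is_shortest e wt x z q -> y \in q -> Int p y.
Proof.
move=> np [s [hs xs xu xv]] [s' [hs' zs zu zv]] xz hq yq.
have es : s' = s by apply: U np hs' hs.
subst s'; have hu := shortest_upath hs.
case/splitPr: xs hs hu zs => a1 c1 hs hu zs.
move: zs; rewrite mem_cat inE eq_sym (negbTE xz) /= => /orP [za|zc].
  case/splitPr: za hs hu => m r hs hu.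
  have E : (m ++ z :: r) ++ x :: c1 = m ++ (z :: rcons r x) ++ c1.
    by rewrite -catA !cat_cons cat_rcons.
  rewrite E in hs hu.
  have hseg := seg hs; rewrite last_rcons in hseg.
  have eq := U _ _ _ _ xz (shortest_rev hseg) hq.
  have yseg : y \in z :: rcons r x by rewrite -mem_rev eq.
  have lz : last z (rcons r x) != p.2 by rewrite last_rcons.
  have [yu yv] := endpoints hu zu lz yseg.
  by exists (m ++ (z :: rcons r x) ++ c1); split => //; rewrite !mem_cat yseg orbT.
case/splitPr: zc hs hu => m r hs hu.
have E : a1 ++ x :: m ++ z :: r = a1 ++ (x :: rcons m z) ++ r.
  by rewrite !cat_cons cat_rcons.
rewrite E in hs hu.
have hseg := seg hs; rewrite last_rcons in hseg.
have eq := U _ _ _ _ xz hseg hq.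
have yseg : y \in x :: rcons m z by rewrite eq.
have lz : last x (rcons m z) != p.2 by rewrite last_rcons.
have [yu yv] := endpoints hu xu lz yseg.
by exists (a1 ++ (x :: rcons m z) ++ r); split => //; rewrite !mem_cat yseg orbT.
Qed.

Lemma between u v a w c y z : is_shortest e wt u v (a ++ w :: c) ->
  y \in c -> z \in c -> y != z ->
  exists q, (is_shortest e wt w z q /\ y \in q) \/ (is_shortest e wt w y q /\ z \in q).
Proof.
move=> hs yc zc yz.
case/splitPr: zc hs yc => m r hs yc.
move: yc; rewrite mem_cat inE (negbTE yz) /= => /orP [ym|yr].
  exists (w :: rcons m z); left; split; last by rewrite inE mem_rcons inE ym !orbT.
  have E : a ++ w :: m ++ z :: r = a ++ (w :: rcons m z) ++ r by rewrite !cat_cons cat_rcons.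
  rewrite E in hs; have := seg hs; by rewrite last_rcons.
case/splitPr: yr hs => r1 r2 hs.
exists (w :: rcons (m ++ z :: r1) y); right; split.
  have E : a ++ w :: m ++ z :: r1 ++ y :: r2 = a ++ (w :: rcons (m ++ z :: r1) y) ++ r2.
    by rewrite !cat_cons cat_rcons -catA.
  rewrite E in hs; have := seg hs; by rewrite last_rcons.
by rewrite inE mem_rcons inE mem_cat inE eqxx !orbT.
Qed.


Lemma Int_in (U : Uq) p w s : p.1 != p.2 -> Int p w -> is_shortest e wt p.1 p.2 s ->
  w \in s.
Proof. by move=> np [s' [h1 h2 _ _]] hs; rewrite -(U _ _ _ _ np h1 hs). Qed.

Lemma core (U : Uq) (P : nat -> V * V) (w0 : V) (x : nat -> V)
  (Hd : forall i, (i < 4)%N -> (P i).1 != (P i).2)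
  (H0 : forall i, (i < 4)%N -> Int (P i) w0)
  (Hx : forall i k, (i < 4)%N -> (k < 4)%N -> Int (P i) (x k) <-> i != k) : False.
Proof.
have xw : forall k, (k < 4)%N -> x k != w0.
  move=> k hk; apply/eqP => E; have := H0 k hk; rewrite -E => /(Hx k k hk hk).
  by rewrite eqxx.
have xx : forall k l, (k < 4)%N -> (l < 4)%N -> k != l -> x k != x l.
  move=> k l hk hl kl; apply/eqP => E.
  have : Int (P k) (x l) by apply/(Hx k l hk hl).
  by rewrite -E => /(Hx k k hk hk); rewrite eqxx.
have fin : forall k l, (k < 4)%N -> (l < 4)%N -> k != l -> forall q,
    is_shortest e wt w0 (x k) q -> x l \in q -> False.
  move=> k l hk hl kl q hq lq.
  have ik : Int (P l) (x k) by apply/(Hx l k hl hk); rewrite eq_sym.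
  have := sub_int U (Hd l hl) (H0 l hl) ik (_ : w0 != x k) hq lq.
  rewrite eq_sym xw // => /(_ isT) /(Hx l l hl hl); by rewrite eqxx.
have [s [hs w0s _ _]] := H0 0%N isT.
have xs : forall k, (0 < k < 4)%N -> x k \in s.
  move=> k /andP [k0 k4]; apply: (Int_in U (Hd 0%N isT) _ hs).
  by apply/(Hx 0%N k isT k4); rewrite eq_sym -lt0n.
case/splitPr: w0s hs xs => a c hs xs.
have two : forall k l, (0 < k < 4)%N -> (0 < l < 4)%N -> k != l ->
    (x k \in c) = (x l \in c) -> False.
  move=> k l hk hl kl.
  have k4 : (k < 4)%N by case/andP: hk.
  have l4 : (l < 4)%N by case/andP: hl.
  have memk := xs k hk; have meml := xs l hl.
  rewrite !mem_cat !inE (negbTE (xw k k4)) (negbTE (xw l l4)) /= in memk meml.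
  case kc: (x k \in c) => /esym lc.
    have [q [[hq kq]|[hq lq]]] := between hs kc lc (xx k l k4 l4 kl).
      by apply: (fin l k l4 k4 _ q hq kq); rewrite eq_sym.
    exact: (fin k l k4 l4 kl q hq lq).
  rewrite kc orbF in memk; rewrite lc orbF in meml.
  have hs' := shortest_rev hs; rewrite rev_cat rev_cons cat_rcons in hs'.
  rewrite -mem_rev in memk; rewrite -mem_rev in meml.
  have [q [[hq kq]|[hq lq]]] := between hs' memk meml (xx k l k4 l4 kl).
    by apply: (fin l k l4 k4 _ q hq kq); rewrite eq_sym.
  exact: (fin k l k4 l4 kl q hq lq).
case b1: (x 1%N \in c); case b2: (x 2%N \in c); case b3: (x 3%N \in c).
all: first [ by apply: (two 1%N 2%N); rewrite ?b1 ?b2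
           | by apply: (two 1%N 3%N); rewrite ?b1 ?b3
           | by apply: (two 2%N 3%N); rewrite ?b2 ?b3 ].
Qed.


Lemma Mem (U : Uq) (p : V * V) (t : R) w : p.1 != p.2 -> 0 < t -> t <= 1 ->
  (t <= fbc e wt w p) <-> Int p w.
Proof.
move=> np t0 t1; split.
  move=> le; have := lt_le_trans t0 le; rewrite /fbc.
  case: ifP => [_|sn]; first by rewrite ltxx.
  case: (eqVneq (sigma_via e wt p.1 p.2 w) 0%N) => [E|NE].
    by rewrite E mul0r ltxx.
  move=> _; move: NE; rewrite /sigma_via sum_nat_eq0 negb_forall => /existsP [n].
  rewrite /= -lt0n => /card_gt0P [tt]; rewrite inE => /and4P [h1 h2 h3 h4].
  by exists tt.
move=> [s [hs ws wu wv]].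
have eqv : sigma_via e wt p.1 p.2 w = sigma e wt p.1 p.2.
  rewrite /sigma_via /sigma; apply: eq_bigr => n _; apply: eq_card => tt.
  rewrite !inE; case ht: (is_shortest e wt p.1 p.2 tt) => //=.
  by rewrite (U _ _ _ _ np ht hs) ws wu wv.
have sp := sigma_pos hs.
rewrite /fbc eqv; case: ifP => [/eqP E|_]; first by rewrite E in sp.
by rewrite divff // pnatr_eq0 -lt0n.
Qed.

End S.

Theorem theorem7 (R : realFieldType) (V : finType) (e : rel V)
    (wt : V -> V -> R)
    (e_sym : symmetric e) (e_irr : irreflexive e)
    (wt_sym : forall x y, wt x y = wt y x)
    (wt_ge0 : forall x y, 0 <= wt x y)
    (us vs : V) (huv : us != vs)
    (hA : (sigma e wt us vs <= 2)%N)
    (hB : forall u v : V, u != v -> (u, v) != (us, vs) ->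
            (sigma e wt u v <= 1)%N) :
  pdim_le e wt 3.
Proof.
move=> A [uA [hdA shA]]; rewrite leqNgt; apply/negP => big.
have U := Uq_of e_sym wt_sym huv hB.
case: A uA hdA shA big => [//|d A'] uA hdA shA big.
set A := d :: A' in uA hdA shA big.
set pt := fun i => nth d A i.
have ptA : forall i, (i < 4)%N -> pt i \in A.
  by move=> i hi; apply: mem_nth; apply: leq_trans hi big.
have fge0 : forall w p, 0 <= fbc e wt w p.
  move=> w p; rewrite /fbc; case: ifP => // _; exact: divr_ge0.
have tpos : forall a, a \in A -> 0 < a.2.
  have [w H] := shA [::] (fun a (h : a \in [::]) => match notF h with end).
  move=> a aA; have := H a aA; rewrite in_nil => /esym /negbT.
  by rewrite -ltNge => /(le_lt_trans (fge0 w a.1)).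
have key : forall S : seq ((V * V) * R), {subset S <= A} -> exists w, forall i, (i < 4)%N ->
    (pt i \in S) <-> Int e wt (pt i).1 w.
  move=> S sS; have [w H] := shA S sS; exists w => i hi.
  have pA := ptA i hi; rewrite (H _ pA).
  have [np /andP [_ t1]] := hdA _ pA.
  exact: (Mem U w np (tpos _ pA) t1).
have np : forall i, (i < 4)%N -> (pt i).1.1 != (pt i).1.2.
  by move=> i hi; have [] := hdA _ (ptA i hi).
have ptT : forall i, (i < 4)%N -> pt i \in take 4 A.
  move=> i hi; rewrite /pt -(nth_take d hi); apply: mem_nth.
  rewrite size_take; case: ifP => // _; exact: leq_trans hi big.
have ptE : forall i k, (i < 4)%N -> (k < 4)%N -> (pt i == pt k) = (i == k).
  move=> i k hi hk; apply: nth_uniq => //; exact: leq_trans big.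
have [w0 H0] := key (take 4 A) (fun a h => mem_take h).
have xk : forall k, (k < 4)%N -> exists w, forall i, (i < 4)%N ->
    Int e wt (pt i).1 w <-> i != k.
  move=> k hk.
  have sub : {subset [seq a <- take 4 A | a != pt k] <= A}.
    by move=> a; rewrite mem_filter => /andP [_ /mem_take].
  have [w H] := key _ sub.
  exists w => i hi; rewrite -H // mem_filter ptT // andbT ptE //.

have [x0 X0] := xk 0%N isT.
have [x1 X1] := xk 1%N isT.
have [x2 X2] := xk 2%N isT.
have [x3 X3] := xk 3%N isT.
apply: (@core R V e wt e_sym wt_sym wt_ge0 U (fun i => (pt i).1) w0
  (fun k => nth x0 [:: x0; x1; x2; x3] k)).
- exact: np.
- by move=> i hi; apply/H0/ptT.
- move=> i k hi; case: k => [|[|[|[|k]]]] //= _.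
  + exact: X0.
  + exact: X1.
  + exact: X2.
  + exact: X3.
Qed.
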